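(* Let $H$ be a strong symplectic Hilbert space with signature $(\infty,\infty)$ and let $W\subseteq H$ be a maximal positive-definite subspace which is not maximally completely positive-definite. Then $W\cap W^{\perp_s}=0$, and $W\oplus W^{\perp_s}$ is a proper dense subspace of $H$.
   Context: All Hilbert spaces are complex and separable. A strong symplectic structure on a Hilbert space $H$ is a continuous sesquilinear form $[\cdot,\cdot]$ (linear in the first, conjugate-linear in the second variable) with $[y,x]=-\overline{[x,y]}$, non-degenerate, and such that $x\mapsto[\cdot,x]$ maps $H$ onto its dual. For $L\subseteq H$, $L^{\perp_s}=\{x:[x,y]=0\ \forall y\in L\}$. A closed subspace $L\subseteq H$ is maximal positive-definite if $-i[x,x]>0$ for every $0\ne x\in L$ and $L$ is not properly contained in a subspace with the same property; it is maximally completely positive-definite if moreover there is $c_L>0$ with $-i[x,x]\ge c_L\|x\|^2$ for all $x\in L$. If $L$ is maximally completely positive-definite then $H=L\oplus L^{\perp_s}$ and $(n_+,n_-)=(\dim L,\dim L^{\perp_s})$ is independent of $L$; this is the signature of $H$. *)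

(* Defs.v *)
From HB Require Import structures.
From mathcomp Require Import all_boot all_order all_algebra.
From mathcomp Require Import reals.
From mathcomp Require Import complex.
Set Implicit Arguments. Unset Strict Implicit. Unset Printing Implicit Defensive.
Import Order.TTheory GRing.Theory Num.Theory.
Local Open Scope ring_scope.

(* R[i] is a numClosedFieldType; its order: 0 < z iff z is a positive real.
   'i is the imaginary unit, z^* complex conjugation (Num.conj). *)

Section Hilbert.
Variable R : realType.
Local Notation C := R[i].
Variable V : lmodType C.

Definition hnorm (ip : V -> V -> C) (x : V) : C := sqrtC (ip x x).

Definition is_hilbert (ip : V -> V -> C) : Prop :=
  [/\ (forall a x y z, ip (a *: x + y) z = a * ip x z + ip y z),
      (forall x y, ip y x = (ip x y)^*),
      (forall x, 0 <= ip x x /\ (ip x x = 0 -> x = 0)),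
      (forall u : nat -> V,
         (forall e : C, 0 < e -> exists N, forall m n, (N <= m)%N -> (N <= n)%N ->
             hnorm ip (u m - u n) < e) ->
         exists l, forall e : C, 0 < e -> exists N, forall n, (N <= n)%N ->
             hnorm ip (u n - l) < e)
    &
      exists d : nat -> V, forall x (e : C), 0 < e -> exists n, hnorm ip (x - d n) < e].

Definition cont_functional (ip : V -> V -> C) (f : V -> C) : Prop :=
  (forall a x y, f (a *: x + y) = a * f x + f y) /\
  exists M : C, 0 < M /\ forall x, `|f x| <= M * hnorm ip x.

Definition strong_symplectic (ip : V -> V -> C) (w : V -> V -> C) : Prop :=
  [/\ (forall a x y z, w (a *: x + y) z = a * w x z + w y z),
      (forall x y, w y x = - (w x y)^*),
      (exists M : C, 0 < M /\ forall x y, `|w x y| <= M * hnorm ip x * hnorm ip y),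
      (forall x, (forall y, w x y = 0) -> x = 0)
    & (forall f, cont_functional ip f -> exists x, forall y, f y = w y x)].

Definition sperp (w : V -> V -> C) (L : V -> Prop) : V -> Prop :=
  fun x => forall y, L y -> w x y = 0.

Definition is_subspace (L : V -> Prop) : Prop :=
  L 0 /\ forall a x y, L x -> L y -> L (a *: x + y).

Definition is_closed_subspace (ip : V -> V -> C) (L : V -> Prop) : Prop :=
  is_subspace L /\
  forall (u : nat -> V) l, (forall n, L (u n)) ->
    (forall e : C, 0 < e -> exists N, forall n, (N <= n)%N -> hnorm ip (u n - l) < e) ->
    L l.

Definition pos_def (w : V -> V -> C) (L : V -> Prop) : Prop :=
  forall x, L x -> x <> 0 -> 0 < - 'i * w x x.

Definition max_pos_def (ip w : V -> V -> C) (L : V -> Prop) : Prop :=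
  [/\ is_closed_subspace ip L, pos_def w L &
      forall M : V -> Prop, is_closed_subspace ip M -> pos_def w M ->
        (forall x, L x -> M x) -> forall x, M x -> L x].

Definition max_comp_pos_def (ip w : V -> V -> C) (L : V -> Prop) : Prop :=
  max_pos_def ip w L /\
  exists c : C, 0 < c /\ forall x, L x -> c * hnorm ip x ^+ 2 <= - 'i * w x x.

Definition inf_dim (L : V -> Prop) : Prop :=
  forall n : nat, exists v : 'I_n -> V, (forall i, L (v i)) /\
    forall c : 'I_n -> C, \sum_(i < n) c i *: v i = 0 -> forall i, c i = 0.

Definition signature_inf_inf (ip w : V -> V -> C) : Prop :=
  exists L, max_comp_pos_def ip w L /\ inf_dim L /\ inf_dim (sperp w L).

Definition dense (ip : V -> V -> C) (S : V -> Prop) : Prop :=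
  forall x (e : C), 0 < e -> exists y, S y /\ hnorm ip (x - y) < e.

Definition ssum (A B : V -> Prop) : V -> Prop :=
  fun z => exists x y, A x /\ B y /\ z = x + y.

End Hilbert.

(* Main.v *)
Require Import Defs.
From HB Require Import structures.
From mathcomp Require Import all_boot all_order all_algebra.
From mathcomp Require Import reals complex.
From mathcomp Require Import ring lra.
From Stdlib Require Import Classical.
Set Implicit Arguments. Unset Strict Implicit. Unset Printing Implicit Defensive.
Import Order.TTheory GRing.Theory Num.Theory.
Local Open Scope complex_scope.
Local Open Scope ring_scope.

Section Basics.
Variable R : realType.
Local Notation C := R[i].

Definition ac (c : C) : R := complex.Re `|c|.

Lemma acE (c : C) : `|c| = (ac c)%:C.
Proof. by case: c. Qed.

Lemma ac_ge0 c : 0 <= ac c.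
Proof. by have := normr_ge0 c; rewrite acE -[0 : C]/((0:R)%:C) lecR. Qed.

Lemma acM a b : ac (a * b) = ac a * ac b.
Proof. by apply: (@complexI R); rewrite rmorphM /= -!acE normrM. Qed.

Lemma acD a b : ac (a + b) <= ac a + ac b.
Proof. by rewrite -lecR rmorphD /= -!acE ler_normD. Qed.

Lemma acN a : ac (- a) = ac a.
Proof. by apply: (@complexI R); rewrite -!acE normrN. Qed.

Lemma ac_eq0 a : ac a = 0 -> a = 0.
Proof. move=> h; apply/eqP; rewrite -normr_eq0 acE h //. Qed.

Lemma acR (r : R) : ac r%:C = `|r|.
Proof.
apply: (@complexI R); rewrite -acE.
by case: (lerP 0 r) => h; [rewrite !ger0_norm // lecR | rewrite !ltr0_norm ?ltcR // rmorphN].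
Qed.

Lemma ac_conj a : ac a^* = ac a.
Proof. by apply: (@complexI R); rewrite -!acE norm_conjC. Qed.

Lemma ac2 a : ((ac a) ^+ 2)%:C = a * a^*.
Proof. by rewrite rmorphXn /= -acE normCK. Qed.

Lemma Re_add (a b : C) : complex.Re (a + b) = complex.Re a + complex.Re b.
Proof. by case: a; case: b. Qed.
Lemma Re_opp (a : C) : complex.Re (- a) = - complex.Re a.
Proof. by case: a. Qed.
Lemma Re_conj (a : C) : complex.Re (a^*) = complex.Re a.
Proof. by case: a. Qed.
Lemma Re_realM (r : R) (a : C) : complex.Re (r%:C * a) = r * complex.Re a.
Proof. by case: a => x y /=; rewrite mul0r subr0. Qed.
Lemma Re_real (r : R) : complex.Re (r%:C) = r.
Proof. by []. Qed.
Lemma Re_le_ac (a : C) : complex.Re a <= ac a.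
Proof.
case: a => x y; rewrite /ac /=.
apply: le_trans (ler_norm x) _. rewrite -sqrtr_sqr ler_sqrt ?lerDl ?sqr_ge0 //.
by rewrite addr_ge0 ?sqr_ge0.
Qed.
Lemma ge0_real (a : C) : 0 <= a -> a = (complex.Re a)%:C.
Proof. by case: a => x y; rewrite lecE /= => /andP[/eqP -> _]. Qed.
Lemma gt0_real (a : C) : 0 < a -> a = (complex.Re a)%:C /\ 0 < complex.Re a.
Proof. by case: a => x y; rewrite ltcE /= => /andP[/eqP -> h]. Qed.

Lemma ac_nat n : ac (n%:R : C) = n%:R.
Proof. by apply: (@complexI R); rewrite -acE normr_nat rmorph_nat. Qed.
Lemma conjR (r : R) : (r%:C)^* = r%:C :> C.
Proof. by change (Complex r (-0) = Complex r 0); rewrite oppr0. Qed.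
Lemma conjRM (r : R) (c : C) : (r%:C * c)^* = r%:C * c^*.
Proof. by rewrite rmorphM; congr (_ * _); exact: conjR. Qed.
Lemma acdivR (c : C) (r : R) : 0 < r -> ac (c / r%:C) = ac c / r.
Proof. by move=> hr; rewrite acM -fmorphV acR ger0_norm // invr_ge0 ltW. Qed.
Lemma ac_i : ac ('i : C) = 1.
Proof. by apply: (@complexI R); rewrite -acE normCi. Qed.
End Basics.
Arguments ac {R}.
Section Form.
Variable R : realType.
Local Notation C := R[i].
Variable V : lmodType C.
Variable f : V -> V -> C.
Hypothesis flin : forall a x y z, f (a *: x + y) z = a * f x z + f y z.

Lemma fD x y z : f (x + y) z = f x z + f y z.
Proof. by rewrite -[x]scale1r flin mul1r scale1r. Qed.
Lemma f0 z : f 0 z = 0.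
Proof. have h := fD 0 0 z; rewrite addr0 in h. by apply: (addrI (f 0 z)); rewrite -h addr0. Qed.
Lemma fZ a x z : f (a *: x) z = a * f x z.
Proof. by rewrite -[a *: x]addr0 flin f0 addr0. Qed.
Lemma fN x z : f (- x) z = - f x z.
Proof. by rewrite -scaleN1r fZ mulN1r. Qed.
Lemma fB x y z : f (x - y) z = f x z - f y z.
Proof. by rewrite fD fN. Qed.
Lemma fsum x y t z : f (x - t *: y) z = f x z - t * f y z.
Proof. by rewrite fB fZ. Qed.

Hypothesis fh : forall x y, f y x = (f x y)^*.

Lemma fr0 z : f z 0 = 0.
Proof. by rewrite fh f0 conjC0. Qed.

Lemma CS_gen x y :
  (forall t, 0 <= f (x - t *: y) (x - t *: y)) -> 0 < complex.Re (f y y) ->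
  ac (f x y) ^+ 2 <= complex.Re (f x x) * complex.Re (f y y).
Proof.
move=> hpos hb; set b := complex.Re (f y y).
have fyy : f y y = b%:C.
  rewrite /b; have := fh y y; case: (f y y) => p q /= [] /eqP.
  by rewrite -subr_eq0 opprK -mulr2n mulrn_eq0 /= => /eqP ->.
have fxx : f x x = (complex.Re (f x x))%:C.
  by apply: ge0_real; have := hpos 0; rewrite scale0r subr0.
set c := f x y.
have bC : b%:C != 0 :> C by rewrite -[0:C]/((0:R)%:C) (inj_eq (@complexI _)) gt_eqF.
have conjb : (b%:C)^* = b%:C :> C by apply: conj_Creal; rewrite -fyy CrealE -fh.
have fhc : forall u v, (f u v)^* = f v u by move=> u v; rewrite [RHS]fh.
have E t : f (x - t *: y) (x - t *: y) = f x x - t^* * c - t * (c^* - t^* * b%:C).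
  rewrite fsum [f x (x - _)]fh [f y (x - _)]fh !fsum !rmorphB !rmorphM /=.
  by rewrite !fhc fyy -/c -[f y x]/(f y x) fh.
have := hpos (c / b%:C); rewrite E.
have -> : f x x - (c / b%:C)^* * c - (c / b%:C) * (c^* - (c / b%:C)^* * b%:C)
   = (complex.Re (f x x) - ac c ^+ 2 / b)%:C.
  rewrite rmorphM fmorphV /= conjb rmorphB rmorphM fmorphV /= ac2 -fxx. field. done.
rewrite -[0:C]/((0:R)%:C) lecR subr_ge0 ler_pdivrMr //.
Qed.

End Form.
Section Func.
Variable R : realType.
Variable V : lmodType R[i].
Variable g : V -> R[i].
Hypothesis glin : forall a x y, g (a *: x + y) = a * g x + g y.
Lemma gD x y : g (x + y) = g x + g y.
Proof. by rewrite -[x]scale1r glin mul1r scale1r. Qed.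
Lemma g0 : g 0 = 0.
Proof. have h := gD 0 0; rewrite addr0 in h. by apply: (addrI (g 0)); rewrite -h addr0. Qed.
Lemma gZ a x : g (a *: x) = a * g x.
Proof. by rewrite -[a *: x]addr0 glin g0 addr0. Qed.
Lemma gN x : g (- x) = - g x.
Proof. by rewrite -scaleN1r gZ mulN1r. Qed.
Lemma gB x y : g (x - y) = g x - g y.
Proof. by rewrite gD gN. Qed.
End Func.
Section Zid.
Variable V : zmodType.
Lemma zid1 (a b c d : V) : a - (b + c) = (a - d - c) + (d - b).
Proof. by rewrite -addrA [- c + _]addrC addrA -(addrA a) addKr opprD addrA. Qed.
Lemma zid2 (x l s : V) : x - l = (x - s) + (s - l).
Proof. by rewrite -addrA addKr. Qed.
End Zid.

Section RealAux.
Variable R : realType.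
Lemma small_inv (e : R) : 0 < e -> exists N, forall n, (N <= n)%N -> 1 / (n.+1)%:R < e.
Proof.
move=> he; have h0 : 0 <= 1 / e by rewrite divr_ge0 // ltW.
exists (Num.bound (1 / e)) => n hn.
have h1 := archi_boundP h0.
have h2 : (Num.bound (1 / e))%:R <= (n.+1)%:R :> R by rewrite ler_nat; apply: leq_trans hn _.
have h3 : 1 / e < (n.+1)%:R by exact: lt_le_trans h1 h2.
have hn0 : 0 < (n.+1)%:R :> R by rewrite ltr0n.
rewrite ltr_pdivrMr // mulrC -ltr_pdivrMr //.
Qed.

Lemma lim_le (a : R) (f : nat -> R) : (forall n, a <= f n) ->
  (forall e, 0 < e -> exists N, forall n, (N <= n)%N -> f n < e) -> a <= 0.
Proof.
move=> h1 h2; case: (lerP a 0) => // ha.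
have [N hN] := h2 _ ha; have := hN N (leqnn N); have := h1 N.
by move=> p q; have := le_lt_trans p q; rewrite ltxx.
Qed.
Definition dl (n : nat) : R := 1 / (n.+1)%:R.
Lemma dl_gt0 n : 0 < dl n.
Proof. by rewrite /dl divr_gt0 // ltr0n. Qed.
Lemma dl_le1 n : dl n <= 1.
Proof. by rewrite /dl ler_pdivrMr ?ltr0n // mul1r ler1n. Qed.
Lemma dl_small (e : R) : 0 < e -> exists N, forall n, (N <= n)%N -> dl n < e.
Proof. exact: small_inv. Qed.
Lemma key_ineq (r X q : R) : 0 < r -> r * q < 1 -> 0 <= X ->
  0 <= r ^+ 2 * X * q - 2 * (r * X) -> X <= 0.
Proof.
move=> hr hq hX h.
have h1 : 0 <= r * (X * (r * q - 2)).
  by have -> : r * (X * (r * q - 2)) = r ^+ 2 * X * q - 2 * (r * X) by ring.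
rewrite pmulr_rge0 // in h1.
nra.
Qed.
Lemma aux1 (a b M : R) : 0 < b -> 0 <= a -> a^+2 <= M * a * b -> a <= (`|M| + 1) * b.
Proof.
move=> hb ha h; have hm := ler_norm M.
have [->|apos] := eqVneq a 0; first by rewrite mulr_ge0 // ?ltW //; have := normr_ge0 M; move=> h0; lra.
have ha' : 0 < a by rewrite lt_neqAle eq_sym apos.
have : a <= M * b by rewrite -(ler_pM2l ha') -expr2; have -> : a * (M * b) = M * a * b by ring.
move: (normr_ge0 M) => h0 h1; nra.
Qed.
Lemma aux2 (a b c M CJ : R) : 0 <= a -> 0 <= b -> 0 <= c -> 0 < CJ ->
  c^+2 <= M * a * b -> b <= CJ * c -> c <= (`|M| * CJ + 1) * a.
Proof.
move=> ha hb hc hCJ h1 h2; have hm := ler_norm M; have hm0 := normr_ge0 M.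
have [->|cpos] := eqVneq c 0; first by rewrite mulr_ge0 //; nra.
have hc' : 0 < c by rewrite lt_neqAle eq_sym cpos.
have h3 : M * a * b <= `|M| * a * (CJ * c).
  apply: le_trans (_ : M * a * b <= `|M| * a * b) _.
    by rewrite ler_wpM2r // ler_wpM2r.
  by rewrite ler_wpM2l // mulr_ge0.
have : c <= `|M| * CJ * a.
  rewrite -(ler_pM2l hc') -expr2; apply: le_trans h1 _; apply: le_trans h3 _.
  by rewrite le_eqVlt; apply/orP; left; apply/eqP; ring.
move=> h4; nra.
Qed.
Lemma aux3 (a q k : R) : 0 < a -> 0 < k -> a ^+ 2 <= q * (k * a) -> 1 / k * a <= q.
Proof.
move=> ha hk h.
have h1 : a <= q * k.
  by rewrite -(ler_pM2l ha) -expr2; apply: le_trans h _; rewrite le_eqVlt; apply/orP; left; apply/eqP; ring.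
by rewrite mul1r mulrC ler_pdivrMr.
Qed.
End RealAux.
Section Rho.
Variable R : realType.
Definition rho (n : nat) : R := (3^-1 : R) ^+ n.
Lemma rho_gt0 n : 0 < rho n.
Proof. by rewrite /rho exprn_gt0 // invr_gt0. Qed.
Lemma rhoS n : rho n.+1 = rho n / 3.
Proof. by rewrite /rho exprSr. Qed.
Lemma rho_mul n : (3 : R) ^+ n * rho n = 1.
Proof. by rewrite /rho -exprMn mulfV ?expr1n // pnatr_eq0. Qed.
Lemma rhoD n k : rho (n + k)%N = rho n * rho k.
Proof. by rewrite /rho exprD. Qed.
Lemma rho_le_dl n : rho n <= dl R n.
Proof.
by rewrite /rho /dl exprVn div1r lef_pV2 ?posrE ?exprn_gt0 ?ltr0n // -natrX ler_nat ltn_expl.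
Qed.
Lemma rho_le1 n : rho n <= 1.
Proof. exact: le_trans (rho_le_dl n) (dl_le1 R n). Qed.
End Rho.
Section Hilb.
Variable R : realType.
Local Notation C := R[i].
Variable V : lmodType C.
Variable ip : V -> V -> C.
Hypothesis ip_lin : forall a x y z, ip (a *: x + y) z = a * ip x z + ip y z.
Hypothesis ip_sym : forall x y, ip y x = (ip x y)^*.
Hypothesis ip_pos : forall x, 0 <= ip x x /\ (ip x x = 0 -> x = 0).

Definition sq x : R := complex.Re (ip x x).
Definition nr x : R := Num.sqrt (sq x).

Lemma ipxx x : ip x x = (sq x)%:C.
Proof. exact: ge0_real (ip_pos x).1. Qed.
Lemma sq_ge0 x : 0 <= sq x.
Proof. by have := (ip_pos x).1; rewrite ipxx -[0:C]/((0:R)%:C) lecR. Qed.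
Lemma sq_eq0 x : sq x = 0 -> x = 0.
Proof. by move=> h; apply: (ip_pos x).2; rewrite ipxx h. Qed.
Lemma nr_ge0 x : 0 <= nr x.
Proof. exact: sqrtr_ge0. Qed.
Lemma nr2 x : nr x ^+ 2 = sq x.
Proof. by rewrite sqr_sqrtr // sq_ge0. Qed.
Lemma nr_eq0 x : nr x = 0 -> x = 0.
Proof. by move=> h; apply: sq_eq0; rewrite -nr2 h expr0n. Qed.
Lemma nr_gt0 x : x != 0 -> 0 < nr x.
Proof. by move=> hx; rewrite lt_neqAle nr_ge0 andbT; apply/eqP => h; move/eqP: hx; apply; apply: nr_eq0. Qed.
Lemma hnormE x : hnorm ip x = (nr x)%:C.
Proof.
rewrite /hnorm ipxx -nr2 rmorphXn /= sqrCK //.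
by rewrite -[0:C]/((0:R)%:C) lecR nr_ge0.
Qed.

Let ipc u v : (ip u v)^* = ip v u. Proof. by rewrite [RHS]ip_sym. Qed.

Lemma ipDr z x y : ip z (x + y) = ip z x + ip z y.
Proof. by rewrite ip_sym (fD ip_lin) rmorphD /= !ipc. Qed.
Lemma ipZr z a x : ip z (a *: x) = a^* * ip z x.
Proof. by rewrite ip_sym (fZ ip_lin) rmorphM /= !ipc. Qed.
Lemma ipNr z x : ip z (- x) = - ip z x.
Proof. by rewrite -scaleN1r ipZr rmorphN1 mulN1r. Qed.
Lemma ipBr z x y : ip z (x - y) = ip z x - ip z y.
Proof. by rewrite ipDr ipNr. Qed.
Lemma ip0r z : ip z 0 = 0.
Proof. exact: (fr0 ip_lin ip_sym). Qed.

Lemma CS x y : ac (ip x y) <= nr x * nr y.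
Proof.
have [->|hy] := eqVneq y 0; first by rewrite ip0r /ac normr0 /= mulr_ge0 // nr_ge0.
have h2 : ac (ip x y) ^+ 2 <= (nr x * nr y) ^+ 2.
  rewrite exprMn !nr2; apply: (CS_gen ip_lin ip_sym).
    by move=> t; exact: (ip_pos _).1.
  by rewrite -/(sq y) -nr2 exprn_gt0 // nr_gt0.
by rewrite -ler_sqr // ?nnegrE ?ac_ge0 // mulr_ge0 // nr_ge0.
Qed.

Lemma sqZ a x : sq (a *: x) = ac a ^+ 2 * sq x.
Proof.
apply: (@complexI R); rewrite -ipxx (fZ ip_lin) ipZr mulrA -ac2 ipxx.
by rewrite -rmorphM.
Qed.
Lemma nrZ a x : nr (a *: x) = ac a * nr x.
Proof. by rewrite /nr sqZ sqrtrM ?sqr_ge0 // sqrtr_sqr ger0_norm // ac_ge0. Qed.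
Lemma nrN x : nr (- x) = nr x.
Proof. by rewrite -scaleN1r nrZ acN /ac normr1 mul1r. Qed.
Lemma nrB x y : nr (x - y) = nr (y - x).
Proof. by rewrite -nrN opprB. Qed.
Lemma nr0 : nr 0 = 0.
Proof. by rewrite -(scale0r (0:V)) nrZ /ac normr0 mul0r. Qed.

Lemma sqD x y : sq (x + y) = sq x + sq y + 2 * complex.Re (ip x y).
Proof.
rewrite /sq (fD ip_lin) !ipDr (ip_sym x y) !Re_add Re_conj.
by rewrite mulr2n mulrDl mul1r; lra.
Qed.
Lemma sqN x : sq (- x) = sq x.
Proof. by rewrite -!nr2 nrN. Qed.

Lemma nrD x y : nr (x + y) <= nr x + nr y.
Proof.
rewrite -ler_sqr ?nnegrE ?addr_ge0 ?nr_ge0 // nr2 sqD sqrrD !nr2.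
have := le_trans (Re_le_ac _) (CS x y); rewrite mulr2n; lra.
Qed.

Lemma paral x y : sq (x + y) + sq (x - y) = 2 * sq x + 2 * sq y.
Proof.
rewrite !sqD sqN ipNr Re_opp; lra.
Qed.

Lemma compl_conv :
  (forall u : nat -> V,
    (forall e : C, 0 < e -> exists N, forall m n, (N <= m)%N -> (N <= n)%N ->
        hnorm ip (u m - u n) < e) ->
    exists l, forall e : C, 0 < e -> exists N, forall n, (N <= n)%N ->
        hnorm ip (u n - l) < e) ->
  forall u : nat -> V,
  (forall e : R, 0 < e -> exists N, forall m n, (N <= m)%N -> (N <= n)%N -> nr (u m - u n) < e) ->
  exists l, forall e : R, 0 < e -> exists N, forall n, (N <= n)%N -> nr (u n - l) < e.
Proof.
move=> H u hc.
have [l hl] : exists l, forall e : C, 0 < e -> exists N, forall n, (N <= n)%N -> hnorm ip (u n - l) < e.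
  apply: H => e he; have [eE he'] := gt0_real he.
  have [N hN] := hc _ he'; exists N => m n hm hn.
  by rewrite hnormE eE ltcR; apply: hN.
exists l => e he; have he2 : (0 : C) < e%:C by rewrite ltcR.
have [N hN] := hl (e%:C) he2.
by exists N => n hn; have := hN n hn; rewrite hnormE ltcR.
Qed.

Hypothesis ip_compl : forall u : nat -> V,
  (forall e : R, 0 < e -> exists N, forall m n, (N <= m)%N -> (N <= n)%N -> nr (u m - u n) < e) ->
  exists l, forall e : R, 0 < e -> exists N, forall n, (N <= n)%N -> nr (u n - l) < e.

Lemma sub_add (S : V -> Prop) : is_subspace S -> forall x y, S x -> S y -> S (x + y).
Proof. by move=> [_ h] x y hx hy; rewrite -[x]scale1r; apply: h. Qed.
Lemma sub_scale (S : V -> Prop) : is_subspace S -> forall a x, S x -> S (a *: x).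
Proof. by move=> [h0 h] a x hx; rewrite -[_ *: _]addr0; apply: h. Qed.
Lemma sub_opp (S : V -> Prop) : is_subspace S -> forall x, S x -> S (- x).
Proof. by move=> hS x hx; rewrite -scaleN1r; apply: sub_scale. Qed.
Lemma sub_sub (S : V -> Prop) : is_subspace S -> forall x y, S x -> S y -> S (x - y).
Proof. by move=> hS x y hx hy; apply: sub_add => //; apply: sub_opp. Qed.

Lemma sep (S : V -> Prop) : is_subspace S -> forall x (eps : R), 0 < eps ->
  (forall s, S s -> eps <= nr (x - s)) ->
  exists v, (forall s, S s -> ip s v = 0) /\ ip x v <> 0.
Proof.
move=> hS x eps he hs.
have S0 : S 0 by case: hS.
pose E : classical_sets.set R := fun r => exists s, S s /\ r = - nr (x - s).
have hE : classical_sets.has_sup E.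
  split; first by exists (- nr (x - 0)); exists 0.
  by exists 0 => r [s [_ ->]]; rewrite oppr_le0 nr_ge0.
pose d := - sup E.
have hd1 : forall s, S s -> d <= nr (x - s).
  move=> s Ss; have := sup_upper_bound hE (ex_intro _ s (conj Ss erefl)).
  by rewrite /d lerNl.
have hd2 : forall del, 0 < del -> exists s, S s /\ nr (x - s) < d + del.
  move=> del hdel; have [r [s [Ss ->]] hr] := sup_adherent hdel hE.
  by exists s; split => //; rewrite /d; lra.
have hdeps : eps <= d.
  have : sup E <= - eps.
    apply: ge_sup; first by exists (- nr (x - 0)); exists 0.
    by move=> r [s [Ss ->]]; rewrite lerN2 hs.
  by rewrite /d; lra.
clearbody d.
have hpos n : 0 < dl R n by exact: dl_gt0.
have [sn hsn] := boolp.choice (fun n => hd2 _ (hpos n)).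
have hsnS n : S (sn n) := (hsn n).1.
have hsnd n : nr (x - sn n) < d + dl R n := (hsn n).2.
have hd0 : 0 < d by exact: lt_le_trans he hdeps.
pose K := 8 * d + 4.
have hK : 0 < K by rewrite /K; lra.
have hcau : forall e : R, 0 < e -> exists N, forall m n, (N <= m)%N -> (N <= n)%N -> nr (sn m - sn n) < e.
  move=> e he'.
  have [N hN] := dl_small (divr_gt0 (exprn_gt0 2 he') hK).
  exists N => m n hm hn.
  have hdm := hN m hm; have hdn := hN n hn.
  move: (hpos m) (hpos n) hdm hdn.
  move: (dl_le1 R m) (dl_le1 R n) (hsnd m) (hsnd n) (hd1 _ (hsnS m)) (hd1 _ (hsnS n)).
  set dm := dl R m; set dn := dl R n.
  move=> dm1 dn1 hsm hsn' hdsm hdsn dm0 dn0 hdm hdn.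
  pose a := x - sn n; pose b := x - sn m.
  have hab : a - b = sn m - sn n by rewrite /a /b opprB addrC -zid2.
  pose mid := (2^-1 : C) *: (sn m + sn n).
  have Smid : S mid by apply: sub_scale => //; apply: sub_add.
  have habp : a + b = (2 : C) *: (x - mid).
    rewrite /a /b /mid scalerBr scalerA mulfV ?pnatr_eq0 // scale1r scaler_nat mulr2n.
    by rewrite addrACA -opprD [sn n + _]addrC.
  have hpar := paral a b.
  have h4 : 4 * d ^+ 2 <= sq (a + b).
    rewrite habp sqZ ac_nat -nr2.
    have : d ^+ 2 <= nr (x - mid) ^+ 2 by rewrite ler_sqr ?nnegrE ?nr_ge0 ?(ltW hd0) //; apply: hd1.
    rewrite -[2%:R ^+ 2]/((2:R) ^+ 2); lra.
  have hsa : sq a <= (d + dn) ^+ 2 by rewrite -nr2 ler_sqr ?nnegrE ?nr_ge0 ?addr_ge0 ?(ltW hd0) ?(ltW dm0) ?(ltW dn0) // ltW.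
  have hsb : sq b <= (d + dm) ^+ 2 by rewrite -nr2 ler_sqr ?nnegrE ?nr_ge0 ?addr_ge0 ?(ltW hd0) ?(ltW dm0) ?(ltW dn0) // ltW.
  have hKm : K * dm < e ^+ 2 by rewrite mulrC -ltr_pdivlMr.
  have hKn : K * dn < e ^+ 2 by rewrite mulrC -ltr_pdivlMr.
  have dm2 : dm ^+ 2 <= dm by rewrite expr2 ger_pMl.
  have dn2 : dn ^+ 2 <= dn by rewrite expr2 ger_pMl.
  rewrite -ltr_sqr ?nnegrE ?nr_ge0 ?ltW // nr2 -hab.
  rewrite /K in hKm hKn; nra.
have [l hl] := ip_compl hcau.
pose v := x - l.
have vE : v = x - l by [].
clearbody v.
have hA : forall s, S s -> forall t, d <= nr (v - t *: s).
  move=> s Ss t.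
  suff : d - nr (v - t *: s) <= 0 by lra.
  apply: (lim_le (f := fun n => nr (sn n - l))) => // n.
  have Ssn : S (sn n + t *: s) by apply: sub_add => //; apply: sub_scale.
  have := hd1 _ Ssn; rewrite (zid1 x (sn n) (t *: s) l).
  have := nrD (x - l - t *: s) (l - sn n); rewrite [nr (l - sn n)]nrB.
  rewrite vE => h1 h2; lra.
have hB : nr v <= d.
  suff : nr v - d <= 0 by lra.
  apply: (lim_le (f := fun n => nr (sn n - l) + dl R n)).
    move=> n; have := nrD (x - sn n) (sn n - l); rewrite -zid2 -vE.
    have := hsnd n; move=> h1 h2; lra.
  move=> e he'.
  have [N1 hN1] := hl (e / 2) (divr_gt0 he' (ltr0n _ 2)).
  have [N2 hN2] := dl_small (divr_gt0 he' (ltr0n _ 2)).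
  exists (maxn N1 N2) => n hn.
  have := hN1 n (leq_trans (leq_maxl _ _) hn).
  have := hN2 n (leq_trans (leq_maxr _ _) hn).
  move=> h1 h2; lra.
have hv0 : eps <= nr v.
  by apply: le_trans hdeps _; have := hA 0 S0 0; rewrite scale0r subr0.
have horth : forall s, S s -> ip s v = 0.
  move=> s Ss.
  set c := ip v s.
  have hs0 := sq_ge0 s.
  pose r := 1 / (sq s + 1).
  have hr : 0 < r by rewrite /r divr_gt0 //; lra.
  have hrs : r * sq s < 1.
    by rewrite /r mul1r mulrC ltr_pdivrMr ?mul1r; lra.
  have h1 : nr v <= nr (v - (r%:C * c) *: s) := le_trans hB (hA s Ss _).
  have h2 : sq v <= sq (v - (r%:C * c) *: s).
    by rewrite -!nr2 ler_sqr ?nnegrE ?nr_ge0.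
  rewrite sqD sqN sqZ ipNr ipZr Re_opp conjRM -[r%:C * c^* * _]mulrA Re_realM in h2.
  rewrite [c^* * _]mulrC -ac2 Re_real acM acR (ger0_norm (ltW hr)) in h2.
  have hc2 : ac c ^+ 2 <= 0.
    apply: (key_ineq hr hrs (sqr_ge0 _)).
    move: h2; rewrite exprMn; move: (ac c ^+ 2) => X' h2; lra.
  have hc0 : c = 0.
    apply: ac_eq0; apply/eqP; rewrite eq_le ac_ge0 andbT; have := ac_ge0 c; move=> h0; nra.
  by rewrite ip_sym -/c hc0 conjC0.
have hlv : ip l v = 0.
  apply: ac_eq0; apply/eqP; rewrite eq_le ac_ge0 andbT.
  have hn1 : 0 < nr v + 1 by have := nr_ge0 v; move=> h0; lra.
  apply: (lim_le (f := fun n => nr (sn n - l) * (nr v + 1))).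
    move=> n /=.
    rewrite -[l](subrK (sn n)) (fD ip_lin) (horth _ (hsnS n)) addr0 subrK.
    apply: le_trans (CS _ _) _; rewrite nrB ler_wpM2l ?nr_ge0 //; lra.
  move=> e he'.
  have [N hN] := hl (e / (nr v + 1)) (divr_gt0 he' hn1).
  by exists N => n hn; rewrite -ltr_pdivlMr // hN.
have hsv : 0 < sq v.
  by rewrite -nr2 exprn_gt0 //; exact: lt_le_trans he hv0.
exists v; split => //.
have xE : x = v + l by rewrite vE subrK.
rewrite xE (fD ip_lin) hlv addr0 ipxx -[0:C]/((0:R)%:C) => /complexI h.
by move: hsv; rewrite h ltxx.
Qed.

Lemma ubp (I : Type) (f : I -> V -> C) :
  (forall i a x y, f i (a *: x + y) = a * f i x + f i y) ->
  (forall i, exists K : R, forall x, ac (f i x) <= K * nr x) ->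
  (forall x, exists B : R, forall i, ac (f i x) <= B) ->
  exists M : R, forall i x, ac (f i x) <= M * nr x.
Proof.
move=> hlin hK hB.
apply: NNPP => hno.
have f0i i : f i 0 = 0 := g0 (hlin i).
pose Sx i : classical_sets.set R := fun r => exists x, nr x <= 1 /\ r = ac (f i x).
have Sx0 i : Sx i 0 by exists 0; rewrite nr0 f0i /ac normr0 ler01.
have hS i : classical_sets.has_sup (Sx i).
  have [K hk] := hK i.
  split; first by exists 0.
  exists `|K| => r [x [hx ->]]; apply: le_trans (hk x) _.
  apply: le_trans (ler_wpM2r (nr_ge0 x) (ler_norm K)) _.
  by rewrite -[X in _ <= X]mulr1; apply: ler_wpM2l.
pose N i := sup (Sx i).
have hN0 i : 0 <= N i by exact: sup_upper_bound (hS i) _ (Sx0 i).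
have hN1 i x : ac (f i x) <= N i * nr x.
  have [->|hx] := eqVneq x 0; first by rewrite f0i nr0 mulr0 /ac normr0.
  have hnx := nr_gt0 hx.
  pose y := ((nr x)^-1)%:C *: x.
  have hy : nr y = 1 by rewrite /y nrZ acR ger0_norm ?invr_ge0 ?nr_ge0 // mulVf // gt_eqF.
  have : ac (f i y) <= N i.
    by apply: sup_upper_bound (hS i) _ _; exists y; rewrite hy lexx.
  rewrite /y (gZ (hlin i)) acM acR ger0_norm ?invr_ge0 ?nr_ge0 //.
  by rewrite mulrC -ler_pdivlMr ?invr_gt0 // invrK.
have hunb : forall Cst, exists i, Cst < N i.
  move=> Cst; apply: NNPP => h; apply: hno; exists Cst => i x.
  have hle : N i <= Cst by rewrite leNgt; apply/negP => hlt; apply: h; exists i.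
  apply: le_trans (hN1 i x) _; apply: ler_wpM2r => //; exact: nr_ge0.
have hA : forall i x r, 0 < r -> exists xi, nr xi <= r /\ 2 / 3 * r * N i <= ac (f i (x + xi)).
  move=> i x r hr.
  have [hN|hN] := eqVneq (N i) 0.
    by exists 0; rewrite nr0 (ltW hr) hN mulr0 ac_ge0.
  have hNp : 0 < N i by rewrite lt_neqAle eq_sym hN hN0.
  have [_ [eta [heta ->]] hlt] := sup_adherent (divr_gt0 hNp (ltr0n _ 3)) (hS i).
  pose xi := r%:C *: eta.
  have hxi : nr xi <= r.
    rewrite /xi nrZ acR ger0_norm ?(ltW hr) //.
    by rewrite -[X in _ <= X]mulr1 ler_wpM2l ?(ltW hr).
  have hfxi : 2 / 3 * r * N i <= ac (f i xi).
    rewrite /xi (gZ (hlin i)) acM acR ger0_norm ?(ltW hr) //.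
    rewrite -/(N i) in hlt; move: hlt; move: (N i) (ac (f i eta)) => a b h; nra.
  have h2 : (2%:R : C) * f i xi = f i (x + xi) - f i (x - xi).
    rewrite (gD (hlin i)) (gB (hlin i)); ring.
  have h3 : 2 * ac (f i xi) <= ac (f i (x + xi)) + ac (f i (x - xi)).
    have := acD (f i (x + xi)) (- f i (x - xi)).
    by rewrite acN -h2 acM ac_nat.
  case: (lerP (ac (f i (x - xi))) (ac (f i (x + xi)))) => hc.
    exists xi; split => //.
    move: hfxi h3 hc; move: (ac (f i xi)) (ac (f i (x + xi))) (ac (f i (x - xi))) => a b c.
    move: (2 / 3 * r * N i) => d h1 h2' h3'; lra.
  exists (- xi); split; first by rewrite nrN.
  move: hfxi h3 hc; move: (ac (f i xi)) (ac (f i (x + xi))) (ac (f i (x - xi))) => a b c.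
  move: (2 / 3 * r * N i) => d h1 h2' h3'; lra.
have [idx hidx] := boolp.choice (fun n : nat => hunb (6 * (3:R) ^+ n * (n%:R : R))).
have hg0 : forall p : I * V * R, exists xi, 0 < p.2 ->
    nr xi <= p.2 /\ 2 / 3 * p.2 * N p.1.1 <= ac (f p.1.1 (p.1.2 + xi)).
  move=> [[i x] r] /=; case: (lerP r 0) => hr.
    by exists 0.
  by have [xi hxi] := hA i x r hr; exists xi.
have [g hg] := boolp.choice hg0.
pose ys := fix ys (n : nat) : V :=
  match n with 0 => 0 | n'.+1 => ys n' + g (idx n', ys n', rho R n') end.
have ysS n : ys n.+1 = ys n + g (idx n, ys n, rho R n) by [].
have hstep n : nr (ys n.+1 - ys n) <= rho R n /\
    2 / 3 * rho R n * N (idx n) <= ac (f (idx n) (ys n.+1)).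
  by rewrite ysS addrC addKr; exact: (hg (idx n, ys n, rho R n) (rho_gt0 R n)).
have hc k n : nr (ys (n + k)%N - ys n) <= 3 / 2 * rho R n * (1 - rho R k).
  elim: k => [|k IH]; first by rewrite addn0 subrr nr0 /rho expr0 subrr mulr0.
  rewrite addnS.
  have e1 : ys (n + k)%N.+1 - ys n = (ys (n + k)%N - ys n) + (ys (n + k)%N.+1 - ys (n + k)%N).
    by rewrite [RHS]addrC -zid2.
  rewrite e1; apply: le_trans (nrD _ _) _.
  have := (hstep (n + k)%N).1; rewrite rhoD rhoS.
  move: IH; move: (nr (ys (n + k)%N - ys n)) (nr (ys (n + k)%N.+1 - ys (n + k)%N)) (rho R n) (rho R k) => a b p q h1 h2.
  nra.
have hc' n m : (n <= m)%N -> nr (ys m - ys n) <= 3 / 2 * rho R n.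
  move=> hnm; rewrite -(subnKC hnm); apply: le_trans (hc _ _) _.
  have := rho_gt0 R n; have := rho_gt0 R (m - n).
  move: (rho R n) (rho R (m - n)%N) => p q h1 h2; nra.
have hcau : forall e : R, 0 < e -> exists N0, forall m n, (N0 <= m)%N -> (N0 <= n)%N -> nr (ys m - ys n) < e.
  move=> e he.
  have [N0 hNN0] := dl_small (divr_gt0 he (ltr0n _ 2)).
  exists N0 => m n hm hn.
  have key k j : (N0 <= k)%N -> (k <= j)%N -> nr (ys j - ys k) < e.
    move=> hk hkj; apply: le_lt_trans (hc' _ _ hkj) _.
    have := hNN0 k hk; have := rho_le_dl R k.
    move: (rho R k) (dl R k) => p q h1 h2; lra.
  case: (leqP n m) => hnm; first exact: key.
  by rewrite nrB; apply: key => //; exact: ltnW.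
have [xl hl] := ip_compl hcau.
have hxl n : nr (xl - ys n) <= 3 / 2 * rho R n.
  suff : nr (xl - ys n) - 3 / 2 * rho R n <= 0 by move=> h; lra.
  apply: (lim_le (f := fun k => nr (ys (n + k)%N - xl))).
    move=> k /=; have := nrD (xl - ys (n + k)%N) (ys (n + k)%N - ys n).
    rewrite -zid2 [nr (xl - _)]nrB; have := hc' n (n + k)%N (leq_addr _ _).
    move: (nr (xl - ys n)) (nr (ys (n + k)%N - xl)) (nr (ys (n + k)%N - ys n)) (rho R n) => a b c p h1 h2; lra.
  move=> e he; have [N0 hN] := hl e he.
  by exists N0 => k hk; apply: hN; apply: leq_trans hk (leq_addl _ _).
have [B hBx] := hB xl.
pose n := Num.bound `|B|.
have hnB : B < n%:R := le_lt_trans (ler_norm B) (archi_boundP (normr_ge0 B)).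
pose i := idx n.
have h1 := (hstep n).2.
have h2 : ac (f i (ys n.+1)) <= ac (f i xl) + ac (f i (ys n.+1 - xl)).
  by rewrite -{1}[ys n.+1](subrK xl) [_ - xl + xl]addrC (gD (hlin i) xl); exact: acD.
have h3 : ac (f i (ys n.+1 - xl)) <= N i * (rho R n / 2).
  apply: le_trans (hN1 i _) _; apply: ler_wpM2l => //.
  by rewrite nrB; apply: le_trans (hxl _) _; rewrite rhoS; lra.
have h4 := hidx n.
have h5 := hBx i.
have hm := rho_mul R n.
have hr := rho_gt0 R n.
rewrite -/i in h1 h4.
move: h1 h2 h3 h4 h5 hm hr hnB; rewrite -/i.
move: (ac (f i (ys n.+1))) (ac (f i xl)) (ac (f i (ys n.+1 - xl))) (N i) (rho R n) ((3:R) ^+ n) (n%:R : R) => a b c Ni p t m.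
move=> h1 h2 h3 h4 h5 hm hr hnB.
have h6 : p * (6 * t * m) < p * Ni by rewrite ltr_pM2l.
have h7 : p * (6 * t * m) = (t * p) * (6 * m) by ring.
rewrite hm mul1r in h7.
nra.
Qed.

Variable w : V -> V -> C.
Hypothesis w_lin : forall a x y z, w (a *: x + y) z = a * w x z + w y z.
Hypothesis w_skew : forall x y, w y x = - (w x y)^*.
Hypothesis w_bnd : exists M : C, 0 < M /\ forall x y, `|w x y| <= M * hnorm ip x * hnorm ip y.
Hypothesis w_nd : forall x, (forall y, w x y = 0) -> x = 0.
Hypothesis w_rep : forall f, cont_functional ip f -> exists x, forall y, f y = w y x.

Lemma wR : exists Mw : R, 0 < Mw /\ forall x y, ac (w x y) <= Mw * nr x * nr y.
Proof.
have [M [hM hb]] := w_bnd; have [ME hm] := gt0_real hM.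
exists (complex.Re M); split => // x y.
by have := hb x y; rewrite acE !hnormE ME -!rmorphM lecR.
Qed.

Lemma wr0 x : w x 0 = 0.
Proof. by rewrite w_skew (f0 w_lin) conjC0 oppr0. Qed.
Lemma wperp x y : w x y = 0 -> w y x = 0.
Proof. by move=> h; rewrite w_skew h conjC0 oppr0. Qed.

Lemma Jex : forall v, exists u, forall z, ip z v = w z u.
Proof.
move=> v; apply: w_rep; split; first by move=> a x y; exact: ip_lin.
exists (nr v + 1)%:C; split; first by rewrite ltcR; have := nr_ge0 v; move=> h; lra.
move=> x; rewrite acE hnormE -rmorphM lecR.
apply: le_trans (CS _ _) _; rewrite mulrC ler_wpM2r ?nr_ge0 //; lra.
Qed.

Lemma J0 u : (forall z, ip z 0 = w z u) -> u = 0.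
Proof. move=> h; apply: w_nd => y; apply: wperp; by rewrite -h ip0r. Qed.

Section WW.
Variable W : V -> Prop.
Hypothesis Wsub : is_subspace W.
Hypothesis Wpos : pos_def w W.

Lemma part1 x : W x -> sperp w W x -> x = 0.
Proof.
move=> Wx hx; have [//|hx0] := eqVneq x 0.
by have := Wpos Wx (elimN eqP hx0); rewrite (hx x Wx) mulr0 ltxx.
Qed.

Lemma perp_sub : is_subspace (sperp w W).
Proof.
split; first by move=> y _; exact: (f0 w_lin).
by move=> a x y hx hy z Wz; rewrite w_lin hx // hy // mulr0 addr0.
Qed.

Lemma ssum_sub : is_subspace (ssum W (sperp w W)).
Proof.
have [W0 Wl] := Wsub; have [P0 Pl] := perp_sub.
split; first by exists 0, 0; rewrite addr0.
move=> a x y [x1 [x2 [h1 [h2 ->]]]] [y1 [y2 [g1 [g2 ->]]]].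
exists (a *: x1 + y1), (a *: x2 + y2); split; first exact: Wl.
split; first exact: Pl.
by rewrite scalerDr addrACA.
Qed.

End WW.

Lemma dperp W : is_closed_subspace ip W -> forall y, sperp w (sperp w W) y -> W y.
Proof.
move=> Wcl y hy; apply: NNPP => nWy.
have [eps [he hs]] : exists eps : R, 0 < eps /\ forall s, W s -> eps <= nr (y - s).
  apply: NNPP => hne.
  have hclose : forall n, exists s, W s /\ nr (y - s) < dl R n.
    move=> n; apply: NNPP => hn; apply: hne; exists (dl R n); split; first exact: dl_gt0.
    move=> s Ws; rewrite leNgt; apply/negP => hlt; apply: hn; by exists s.
  have [u hu] := boolp.choice hclose.
  apply: nWy; apply: Wcl.2 (fun n => (hu n).1) _.
  move=> e he; have [eE hep] := gt0_real he.
  have [N hN] := dl_small hep.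
  exists N => n hn; rewrite hnormE eE ltcR nrB.
  exact: lt_trans (hu n).2 (hN n hn).
have [v [hv1 hv2]] := sep Wcl.1 he hs.
have [J hJ] := boolp.choice Jex.
have hu : sperp w W (J v).
  by move=> s Ws; apply: wperp; rewrite -hJ hv1.
by apply: hv2; rewrite hJ; apply: hy.
Qed.

Lemma dense_part W : is_closed_subspace ip W -> pos_def w W ->
  dense ip (ssum W (sperp w W)).
Proof.
move=> Wcl Wpos x e he; apply: NNPP => hno.
have [eE hep] := gt0_real he.
have hs : forall s, ssum W (sperp w W) s -> complex.Re e <= nr (x - s).
  move=> s Ss; rewrite leNgt; apply/negP => hlt; apply: hno; exists s; split => //.
  by rewrite hnormE eE ltcR.
have [v [hv1 hv2]] := sep (ssum_sub Wcl.1) hep hs.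
have [J hJ] := boolp.choice Jex.
have hWS s : W s -> ssum W (sperp w W) s.
  by move=> Ws; exists s, 0; split => //; split; [exact: (perp_sub W).1 | rewrite addr0].
have hPS z : sperp w W z -> ssum W (sperp w W) z.
  by move=> hz; exists 0, z; split; [exact: Wcl.1.1 | split => //; rewrite add0r].
have hu1 : sperp w W (J v) by move=> s Ws; apply: wperp; rewrite -hJ (hv1 _ (hWS _ Ws)).
have hu2 : sperp w (sperp w W) (J v) by move=> z hz; apply: wperp; rewrite -hJ (hv1 _ (hPS _ hz)).
have hu0 : J v = 0 := part1 Wpos (dperp Wcl hu2) hu1.
by apply: hv2; rewrite hJ hu0 wr0.
Qed.

Lemma coercive W : max_pos_def ip w W -> (forall z, ssum W (sperp w W) z) ->
  max_comp_pos_def ip w W.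
Proof.
move=> Wmax hall; have [[Wsub Wcl] Wpos Wm] := Wmax.
split => //.
have [J hJ] := boolp.choice Jex.
have hJ0 : J 0 = 0 by apply: J0; exact: hJ 0.
have hJskew x p : ip x (J p) = - ip (J x) p.
  by rewrite (ip_sym (J p) x) hJ w_skew rmorphN /= conjCK -hJ.
have [Mw [hMw hw]] := wR.
pose I := {y : V | y != 0}.
have [CJ [hCJ hJb]] : exists CJ : R, 0 < CJ /\ forall p, nr (J p) <= CJ * nr p.
  have := @ubp I (fun p x => ip x (J (val p)) / (nr (val p))%:C).
  case => [p a x y|p|x|M hM].
  - by rewrite /= ip_lin mulrDl mulrA.
  - have hp := nr_gt0 (valP p).
    exists (nr (J (val p)) / nr (val p)) => x /=; rewrite acdivR //.
    have -> : nr (J (val p)) / nr (val p) * nr x = nr x * nr (J (val p)) / nr (val p) by ring.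
    by rewrite ler_pM2r ?invr_gt0 // CS.
  - exists (nr (J x)) => p /=; have hp := nr_gt0 (valP p).
    rewrite acdivR // hJskew acN ler_pdivrMr //; exact: CS.
  exists (`|M| + 1); split; first by have := normr_ge0 M; move=> h; lra.
  move=> p; have [->|hp] := eqVneq p 0.
    by rewrite hJ0 nr0 mulr0 lexx.
  have := hM (exist _ p hp) (J p); rewrite /= acdivR ?nr_gt0 // ipxx acR ger0_norm ?sq_ge0 //.
  have hp' := nr_gt0 hp; rewrite ler_pdivrMr // -nr2.
  by move=> h; apply: aux1 => //; exact: nr_ge0.
have hP0 z : exists a, W a /\ sperp w W (z - a).
  have [a [b [Wa [hb ->]]]] := hall z.
  by exists a; split => //; rewrite [a + b]addrC addrK.
have [P hP] := boolp.choice hP0.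
have e1 u v : w u (P v) = w (P u) (P v).
  rewrite -{1}[u](subrK (P u)) (fD w_lin) ((hP u).2 (P v) (hP v).1) add0r //.
have wsym z x : w (P z) x = w z (P x).
  by rewrite w_skew (e1 x z) -w_skew (e1 z x).
have PW x : W x -> P x = x.
  move=> Wx; apply/eqP; rewrite eq_sym -subr_eq0; apply/eqP.
  apply: (part1 Wpos) (hP x).2.
  by apply: sub_sub => //; exact: (hP x).1.
have hP00 : P 0 = 0 by apply: PW; exact: Wsub.1.
have [KP [hKP hPb]] : exists KP : R, 0 < KP /\ forall z, nr (P z) <= KP * nr z.
  have := @ubp I (fun p z => w z (P (val p)) / (nr (val p))%:C).
  case => [p a x y|p|x|M hM].
  - by rewrite /= w_lin mulrDl mulrA.
  - have hp := nr_gt0 (valP p).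
    exists (Mw * nr (P (val p)) / nr (val p)) => x /=; rewrite acdivR //.
    have -> : Mw * nr (P (val p)) / nr (val p) * nr x = Mw * nr x * nr (P (val p)) / nr (val p) by ring.
    by rewrite ler_pM2r ?invr_gt0 // hw.
  - exists (Mw * nr (P x)) => p /=; have hp := nr_gt0 (valP p).
    by rewrite acdivR // -wsym ler_pdivrMr //; exact: hw.
  have hM2 : forall z q, ac (w z (P q)) <= M * nr z * nr q.
    move=> z q; have [->|hq] := eqVneq q 0.
      by rewrite hP00 wr0 nr0 mulr0 /ac normr0.
    have := hM (exist _ q hq) z; rewrite /= acdivR ?nr_gt0 //.
    by rewrite ler_pdivrMr ?nr_gt0.
  exists (`|M| * CJ + 1); split; first by have := normr_ge0 M; move=> h; nra.
  move=> z.
  have h1 : sq (P z) <= M * nr z * nr (J (P z)).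
    rewrite /sq (hJ (P z) (P z)) wsym; apply: le_trans (Re_le_ac _) _; exact: hM2.
  have h2 := hJb (P z).
  rewrite -nr2 in h1.
  apply: aux2 h1 h2 => //; exact: nr_ge0.
pose Kc := Mw * KP ^+ 2 * CJ ^+ 2.
have hKc : 0 < Kc by rewrite /Kc !mulr_gt0 // exprn_gt0.
exists ((1 / Kc)%:C); split; first by rewrite ltcR divr_gt0.
move=> x Wx.
have hq : 0 <= - 'i * w x x.
  have [->|hx0] := eqVneq x 0; first by rewrite (f0 w_lin) mulr0.
  have h := Wpos x Wx (elimN eqP hx0). exact: ltW h.
rewrite hnormE -rmorphXn nr2 (ge0_real hq) -rmorphM lecR.
set qx := complex.Re (- 'i * w x x).
have hqx : 0 <= qx by have := hq; rewrite {1}(ge0_real hq) -[0:C]/((0:R)%:C) lecR.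
have [x0|hx0] := eqVneq x 0.
  by rewrite x0 -nr2 nr0 expr0n mulr0.
pose y := P (J x).
have Wy : W y := (hP (J x)).1.
have hwxy : w x y = (sq x)%:C.
  by rewrite /y -wsym (PW x Wx) -hJ ipxx.
have hsx : 0 < sq x by rewrite -nr2 exprn_gt0 // nr_gt0.
have hy0 : y != 0.
  apply/eqP => hy; move: hwxy; rewrite hy wr0 -[0:C]/((0:R)%:C) => /complexI h.
  by move: hsx; rewrite -h ltxx.
pose g := fun a b => - 'i * w a b.
have glin : forall a u v z, g (a *: u + v) z = a * g u z + g v z.
  by move=> a u v z; rewrite /g w_lin; ring.
have gh : forall u v, g v u = (g u v)^*.
  by move=> u v; rewrite /g w_skew rmorphM rmorphN /= conjCi; ring.
have gpos : forall t, 0 <= g (x - t *: y) (x - t *: y).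
  move=> t; have Wu : W (x - t *: y) by apply: sub_sub => //; apply: sub_scale.
  have [->|hu0] := eqVneq (x - t *: y) 0; first by rewrite /g (f0 w_lin) mulr0.
  exact: ltW (Wpos _ Wu (elimN eqP hu0)).
have hyy : 0 < complex.Re (g y y) by exact: (gt0_real (Wpos _ Wy (elimN eqP hy0))).2.
have hCS := CS_gen glin gh gpos hyy.
rewrite /g acM acN ac_i mul1r hwxy acR ger0_norm ?sq_ge0 // -/qx in hCS.
have hgy : complex.Re (g y y) <= Kc * sq x.
  apply: le_trans (Re_le_ac _) _; rewrite /g acM acN ac_i mul1r.
  apply: le_trans (hw _ _) _.
  have h1 : nr y <= KP * CJ * nr x.
    apply: le_trans (hPb _) _; rewrite -mulrA ler_wpM2l ?(ltW hKP) //; exact: hJb.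
  rewrite /Kc -nr2.
  have := nr_ge0 y; move: h1; move: (nr y) (nr x) => a b h1 h0.
  have h3 : 0 <= KP * CJ * b by apply: le_trans h0 h1.
  have h2 : a * a <= (KP * CJ * b) ^+ 2 by rewrite -expr2 ler_sqr ?nnegrE.
  have -> : Mw * KP ^+ 2 * CJ ^+ 2 * b ^+ 2 = Mw * (KP * CJ * b) ^+ 2 by ring.
  by rewrite -mulrA ler_wpM2l // ltW.
have : sq x ^+ 2 <= qx * (Kc * sq x).
  apply: le_trans hCS _; rewrite ler_wpM2l //.
move=> h; exact: aux3 hsx hKc h.
Qed.

Lemma main_sec W : max_pos_def ip w W -> ~ max_comp_pos_def ip w W ->
  (forall x, W x -> sperp w W x -> x = 0) /\
  dense ip (ssum W (sperp w W)) /\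
  exists x, ~ ssum W (sperp w W) x.
Proof.
move=> Wmax hn; have [[Wsub Wcl] Wpos _] := Wmax.
split; first exact: part1 Wpos.
split; first exact: dense_part (conj Wsub Wcl) Wpos.
apply: NNPP => h; apply: hn; apply: coercive => // z.
by apply: NNPP => hz; apply: h; exists z.
Qed.

End Hilb.

Unset Implicit Arguments.
Unset Strict Implicit.

Theorem proposition2p13 (R : realType) (V : lmodType R[i])
    (ip w : V -> V -> R[i]) (W : V -> Prop) :
  is_hilbert ip -> strong_symplectic ip w -> signature_inf_inf ip w ->
  max_pos_def ip w W -> ~ max_comp_pos_def ip w W ->
  (forall x, W x -> sperp w W x -> x = 0) /\
  dense ip (ssum W (sperp w W)) /\
  exists x, ~ ssum W (sperp w W) x.
Proof.
move=> [ip_lin ip_sym ip_pos ip_compl _] [w_lin w_skew w_bnd w_nd w_rep] _ Wmax hn.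
have ipc : forall u : nat -> V,
  (forall e : R, 0 < e -> exists N, forall m n, (N <= m)%N -> (N <= n)%N -> nr ip (u m - u n) < e) ->
  exists l, forall e : R, 0 < e -> exists N, forall n, (N <= n)%N -> nr ip (u n - l) < e.
  by apply: compl_conv.
by apply: main_sec.
Qed.
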